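(* For partitions $\lambda$ and $\mu$, $h_\lambda[\Xi_\mu]=|\mathcal C_{\lambda,\mu}|$, where $\mathcal C_{\lambda,\mu}$ is the set of sequences $(\alpha^{(1)},\ldots,\alpha^{(\ell(\lambda))})$ of weak compositions such that $\alpha^{(i)}$ is a weak composition of $\lambda_i$ of length $\ell(\mu)$ and $\mu_j$ divides $\alpha^{(i)}_j$ for all $1\le i\le\ell(\lambda)$, $1\le j\le\ell(\mu)$.
   Context: A weak composition of $m$ of length $\ell$ is a sequence of $\ell$ nonnegative integers summing to $m$. For $f\in Sym$ and a partition $\mu$, $f[\Xi_\mu]$ denotes $f$ evaluated at the multiset of eigenvalues of a permutation matrix of cycle type $\mu$ (the $\mu_i$-th roots of unity for each part $\mu_i$); equivalently substitute $p_k\mapsto\sum_{d\mid k}d\,m_d(\mu)$. $h_\lambda=h_{\lambda_1}\cdots h_{\lambda_{\ell(\lambda)}}$. *)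

(* Defs.v *)
From HB Require Import structures.
From mathcomp Require Import all_boot all_order all_algebra all_field.
Set Implicit Arguments. Unset Strict Implicit. Unset Printing Implicit Defensive.
Import Order.TTheory GRing.Theory Num.Theory.
Local Open Scope ring_scope.

Definition is_partition (la : seq nat) : bool :=
  sorted geq la && all (fun k => 0 < k)%N la.

Definition prim_root (m : nat) : algC :=
  match m with
  | 0 => 1
  | m'.+1 => sval (C_prim_root_exists (ltn0Sn m'))
  end.

Definition roots_of_unity (m : nat) : seq algC :=
  [seq prim_root m ^+ k | k <- iota 0 m].

(* Xi_mu: eigenvalues of a permutation matrix of cycle type mu. *)
Definition Xi (mu : seq nat) : seq algC := flatten (map roots_of_unity mu).

Definition h_eval (k : nat) (xs : seq algC) : algC :=
  \sum_(b : {ffun 'I_(size xs) -> 'I_k.+1} | (\sum_(i : 'I_(size xs)) (b i : nat))%N == k)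
     \prod_(i : 'I_(size xs)) xs`_i ^+ b i.

Definition h_part_eval (la : seq nat) (xs : seq algC) : algC :=
  \prod_(k <- la) h_eval k xs.

(* The set C_{la,mu}: alpha i j is the j-th entry of the weak composition
   alpha^(i); entries are bounded by sumn la (automatic, since
   alpha^(i)_j <= la_i), which only serves to make the type finite. *)
Definition Cset (la mu : seq nat) :
  {set {ffun 'I_(size la) * 'I_(size mu) -> 'I_(sumn la).+1}} :=
  [set alpha : {ffun 'I_(size la) * 'I_(size mu) -> 'I_(sumn la).+1} | [forall i : 'I_(size la),
       ((\sum_(j < size mu) (alpha (i, j) : nat))%N == nth 0%N la i)
       && [forall j : 'I_(size mu), (nth 0%N mu j %| alpha (i, j))%N]]].

(* Main.v *)
Require Import Defs.
From HB Require Import structures.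
From mathcomp Require Import all_boot all_order all_algebra all_field.
From mathcomp Require Import zify.
Import Order.TTheory GRing.Theory Num.Theory.
Local Open Scope ring_scope.
Set Implicit Arguments. Unset Strict Implicit.

Definition Pp (N : nat) (w : nat -> algC) : {poly algC} := \poly_(i < N) w i.
Definition eqN (N : nat) (p q : {poly algC}) := forall i, (i < N)%N -> p`_i = q`_i.

Lemma eqN_refl N p : eqN N p p. Proof. by []. Qed.
Lemma eqN_sym N p q : eqN N p q -> eqN N q p. Proof. by move=> h i /h. Qed.
Lemma eqN_trans N p q r : eqN N p q -> eqN N q r -> eqN N p r.
Proof. by move=> h1 h2 i iN; rewrite h1 // h2. Qed.

Lemma eqN_mul N p p' q q' : eqN N p p' -> eqN N q q' -> eqN N (p * q) (p' * q').
Proof.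
move=> hp hq i iN; rewrite !coefM; apply: eq_bigr => j _.
have jl := ltn_ord j.
rewrite hp ?hq //; lia.
Qed.

Lemma eqN_prod N (I : Type) (r : seq I) (F G : I -> {poly algC}) :
  (forall i, eqN N (F i) (G i)) -> eqN N (\prod_(i <- r) F i) (\prod_(i <- r) G i).
Proof.
move=> h; elim: r => [|x r IH]; first by rewrite !big_nil.
by rewrite !big_cons; apply: eqN_mul.
Qed.

Lemma coefPp_cons N w (q : {poly algC}) k : (k < N)%N ->
  (Pp N w * q)`_k = \sum_(t < k.+1) w t * q`_(k - t).
Proof.
move=> kN; rewrite coefM; apply: eq_bigr => t _; rewrite coef_poly.
have := ltn_ord t; case: ifP => //; lia.
Qed.

Definition fcons (T : finType) n (t : T) (g : {ffun 'I_n -> T}) : {ffun 'I_n.+1 -> T} :=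
  [ffun i => if unlift ord0 i is Some j then g j else t].

Lemma fcons0 (T : finType) n t (g : {ffun 'I_n -> T}) : fcons t g ord0 = t.
Proof. by rewrite ffunE unlift_none. Qed.
Lemma fconsS (T : finType) n t (g : {ffun 'I_n -> T}) j : fcons t g (lift ord0 j) = g j.
Proof. by rewrite ffunE liftK. Qed.

Lemma sum_ffunS (T : finType) n (F : {ffun 'I_n.+1 -> T} -> algC) :
  \sum_f F f = \sum_(t : T) \sum_(g : {ffun 'I_n -> T}) F (fcons t g).
Proof.
rewrite pair_big /=.
rewrite (reindex (fun p : T * {ffun 'I_n -> T} => fcons p.1 p.2)) //=.
exists (fun f : {ffun 'I_n.+1 -> T} => (f ord0, [ffun j => f (lift ord0 j)])).
  by move=> [t g] _ /=; rewrite fcons0; congr pair; apply/ffunP => j; rewrite ffunE fconsS.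
move=> f _ /=; apply/ffunP => i; rewrite ffunE.
by case: unliftP => [j ->|->]; rewrite ?ffunE.
Qed.
Lemma sum_ffun B N n : forall (W : nat -> nat -> algC) k, (k <= B)%N -> (k < N)%N ->
  \sum_(f : {ffun 'I_n -> 'I_B.+1} | (\sum_(i < n) (f i : nat))%N == k)
     \prod_(i < n) W i (f i) = (\prod_(i < n) Pp N (W i))`_k.
Proof.
elim: n => [|n IH] W k kB kN.
  rewrite big_ord0 coef1.
  under eq_bigl do rewrite big_ord0.
  under eq_bigr do rewrite big_ord0.
  case: k kB kN => [|k] _ _ /=.
    rewrite sumr_const card_ffun. by rewrite (card_ord 0).
  by rewrite big_pred0.
rewrite big_mkcond. rewrite (sum_ffunS (T := _) (n := n)). rewrite big_ord_recl coefPp_cons //.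
pose W' := fun i => W i.+1.
have E : forall t : 'I_B.+1,
  \sum_(g : {ffun 'I_n -> 'I_B.+1})
     (if (\sum_(i < n.+1) (fcons t g i : nat))%N == k
      then \prod_(i < n.+1) W i (fcons t g i) else 0)
  = if (t <= k)%N then W 0%N t * (\prod_(i < n) Pp N (W' i))`_(k - t) else 0.
  move=> t.
  under eq_bigr => g _.
    rewrite big_ord_recl fcons0 big_ord_recl fcons0.
    under eq_bigr do rewrite fconsS.
    under [X in W 0%N t * X]eq_bigr do rewrite fconsS lift0.
  over.
  case: leqP => tk.
    rewrite -(IH W' (k - t)%N); [|lia|lia].
    rewrite mulr_sumr [RHS]big_mkcond; apply: eq_bigr => g _.
    have -> : ((t + \sum_(i < n) (g i : nat))%N == k) = ((\sum_(i < n) (g i : nat))%N == (k - t)%N) by apply/eqP/eqP; lia.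
    by case: ifP; rewrite ?mulr0.
  apply: big1 => g _; case: ifP => // /eqP; lia.
under eq_bigr do rewrite E.
rewrite (big_ord_widen_cond B.+1 predT (fun t : nat => W 0%N t * (\prod_(i < n) Pp N (W' i))`_(k - t))) //.
rewrite [RHS]big_mkcond; apply: eq_bigr => t _ /=.
by rewrite ltnS.
Qed.

Lemma h_eval_coef k xs : h_eval k xs = (\prod_(x <- xs) Pp k.+1 (fun a => x ^+ a))`_k.
Proof.
rewrite /h_eval (@sum_ffun k k.+1 (size xs) (fun i a => xs`_i ^+ a) k) //.
by rewrite (big_nth 0) big_mkord.
Qed.

Lemma geo x N : eqN N (Pp N (fun a => x ^+ a) * (1 - x *: 'X)) 1.
Proof.
move=> i iN; rewrite mulrBr mulr1 -scalerAr coefB coefZ coefMX coef1 !coef_poly iN.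
case: i iN => [|i] iN /=; first by rewrite expr0 mulr0 subr0.
by rewrite (ltnW iN) exprS subrr.
Qed.

Lemma divgeo m N : (0 < m)%N -> eqN N (Pp N (fun a => (m %| a)%:R) * (1 - 'X^m)) 1.
Proof.
move=> m0 i iN; rewrite mulrBr mulr1 coefB coefMXn coef1 !coef_poly iN.
case: ltnP => im.
  case: i iN im => [|i] iN im; first by rewrite dvdn0 subr0.
  rewrite subr0 (_ : (m %| i.+1)%N = false) //.
  by apply/negbTE; rewrite gtnNdvd.
have -> : (i - m < N)%N by lia.
have -> : (i == 0%N) = false by apply/negbTE; lia.
have -> : (m %| i)%N = (m %| i - m)%N.
  by rewrite -{1}(subnK im) dvdn_addl.
by rewrite subrr.
Qed.

Lemma prim_root_ok m : (0 < m)%N -> m.-primitive_root (prim_root m).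
Proof. by case: m => // m _; rewrite /prim_root; case: C_prim_root_exists. Qed.

Lemma prod_roots m : (0 < m)%N ->
  \prod_(x <- roots_of_unity m) (1 - x *: 'X) = 1 - 'X^m :> {poly algC}.
Proof.
move=> m0; have pz := prim_root_ok m0.
rewrite /roots_of_unity big_map; move: (prim_root m) pz => z pz.
case: m m0 pz => [//|n] _ pz.
set y := z ^+ n.
have py : n.+1.-primitive_root y by rewrite prim_root_exp_coprime // coprimenS.
have zy : z * y = 1 by rewrite -exprS prim_expr_order.
have E : forall k, 1 - z ^+ k *: 'X = (- z ^+ k)%:P * ('X - (y ^+ k)%:P) :> {poly algC}.
  move=> k; rewrite mulrBr -polyCM mulNr -exprMn zy expr1n mul_polyC scaleNr polyCN polyC1.
  by rewrite opprK addrC.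
have F := factor_Xn_sub_1 py; rewrite /index_iota subn0 in F.
have G : \prod_(i <- iota 0 n.+1) (1 - z ^+ i *: 'X) = (\prod_(i <- iota 0 n.+1) (- z ^+ i))%:P * ('X^(n.+1) - 1) :> {poly algC}.
  under eq_bigr do rewrite E.
  by rewrite big_split /= -rmorph_prod F.
rewrite G.
have HC : \prod_(i <- iota 0 n.+1) (- z ^+ i) = -1.
  have := congr1 (horner^~ 0) G => /=.
  rewrite horner_prod.
  under eq_bigr do rewrite hornerD hornerN hornerZ hornerX mulr0 subr0 hornerC.
  rewrite big1_eq hornerM hornerC hornerD hornerN hornerXn expr0n /= hornerC.
  by rewrite sub0r mulrN1 => /(congr1 -%R); rewrite opprK => ->.
by rewrite HC polyCN polyC1 mulN1r opprB.
Qed.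

Lemma block m N : eqN N (\prod_(x <- roots_of_unity m) Pp N (fun a => x ^+ a))
                        (Pp N (fun a => (m %| a)%:R)).
Proof.
case: m => [|m].
  rewrite /roots_of_unity /= big_nil => i iN; rewrite coef1 coef_poly iN dvd0n.
  by case: i iN.
set A := \prod_(x <- _) _; set D := Pp N _; set c : {poly algC} := 1 - 'X^(m.+1).
have hA : eqN N (A * c) 1.
  rewrite /c -prod_roots // /A -big_split /=.
  have h := eqN_prod (roots_of_unity m.+1) (fun x => @geo x N).
  by rewrite big1_eq in h.
have hD : eqN N (D * c) 1 by apply: divgeo.
have e1 : eqN N (A * (D * c)) A by rewrite -{2}[A]mulr1; apply: eqN_mul.
have e2 : eqN N ((A * c) * D) D by rewrite -{2}[D]mul1r; apply: eqN_mul.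
rewrite [D * c]mulrC mulrA in e1.
exact: eqN_trans (eqN_sym e1) e2.
Qed.

Lemma h_Xi k mu : h_eval k (Xi mu) = (\prod_(m <- mu) Pp k.+1 (fun a => (m %| a)%:R))`_k.
Proof.
rewrite h_eval_coef /Xi big_flatten /= big_map.
by apply: (eqN_prod _ (fun m => @block m k.+1)).
Qed.

Lemma prod_ind (I : finType) (P : I -> bool) : \prod_i (P i)%:R = ([forall i, P i])%:R :> algC.
Proof.
case E: [forall i, P i].
  by move/forallP: E => h; apply: big1 => i _; rewrite h.
move/negbT/forallPn: E => [i /negbTE hi].
by rewrite (bigD1 i) //= hi mul0r.
Qed.

Lemma card_sum (T : finType) (Q : pred T) : (#|[set x | Q x]|)%:R = \sum_x (Q x)%:R :> algC.
Proof.
rewrite -sumr_const big_mkcond; apply: eq_bigr => x _; rewrite inE.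
by case: (Q x).
Qed.

Lemma row_card B k mu : (k <= B)%N ->
  (#|[set g : {ffun 'I_(size mu) -> 'I_B.+1} | ((\sum_(j < size mu) (g j : nat))%N == k)
      && [forall j : 'I_(size mu), (nth 0%N mu j %| g j)%N]]|)%:R
  = (\prod_(m <- mu) Pp k.+1 (fun a => (m %| a)%:R))`_k.
Proof.
move=> kB; rewrite card_sum.
rewrite (big_nth 0%N) big_mkord -(@sum_ffun B k.+1 (size mu) (fun j a => (nth 0%N mu j %| a)%:R) k) //.
rewrite [RHS]big_mkcond; apply: eq_bigr => g _.
by rewrite prod_ind; case: (_ == k).
Qed.

Lemma card_curry (I J T : finType) (P : I -> {ffun J -> T} -> bool) :
  (#|[set a : {ffun I * J -> T} | [forall i, P i [ffun j => a (i, j)]]]|)%:R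
  = \prod_i (#|[set g | P i g]|)%:R :> algC.
Proof.
rewrite card_sum.
under [RHS]eq_bigr do rewrite card_sum.
rewrite bigA_distr_bigA /=.
rewrite (reindex (fun a : {ffun I * J -> T} => [ffun i => [ffun j => a (i, j)]])) /=.
  by apply: eq_bigr => a _; rewrite -prod_ind; apply: eq_bigr => i _; rewrite ffunE.
exists (fun h : {ffun I -> {ffun J -> T}} => [ffun p : I * J => h p.1 p.2]).
  by move=> a _; apply/ffunP => -[i j]; rewrite !ffunE.
by move=> h _; apply/ffunP => i; apply/ffunP => j; rewrite !ffunE.
Qed.

Lemma nth_le_sumn (s : seq nat) i : (nth 0%N s i <= sumn s)%N.
Proof.
elim: s i => [|x s IH] [|i] //=; first exact: leq_addr.
exact: leq_trans (IH i) (leq_addl _ _).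
Qed.

Theorem proposition29 (la mu : seq nat) :
  is_partition la -> is_partition mu ->
  h_part_eval la (Xi mu) = (#|Cset la mu|)%:R.
Proof.
move=> _ _.
pose P := fun (i : 'I_(size la)) (g : {ffun 'I_(size mu) -> 'I_(sumn la).+1}) =>
      ((\sum_(j < size mu) (g j : nat))%N == nth 0%N la i)
      && [forall j : 'I_(size mu), (nth 0%N mu j %| g j)%N].
have -> : Cset la mu = [set a : {ffun 'I_(size la) * 'I_(size mu) -> 'I_(sumn la).+1} |
   [forall i, P i [ffun j => a (i, j)]]].
  apply/setP => a; rewrite !inE; apply: eq_forallb => i /=.
  rewrite /P; under [in RHS]eq_bigr do rewrite ffunE.
  by congr andb; apply: eq_forallb => j; rewrite ffunE.
rewrite (card_curry P) /h_part_eval (big_nth 0%N) big_mkord.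
apply: eq_bigr => i _.
by rewrite h_Xi row_card // nth_le_sumn.
Qed.
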